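(* Let $\epsilon>0$, $\delta\in(0,1)$, $x>0$, and let $\mathcal{R}$ consist of $M=\frac{48x}{\epsilon^2}\ln\frac{2n}{\delta}$ independently generated random RR sets. If $I_{max}\ge xn$, then with probability at least $1-\delta_1$, $\mathcal{F_R}^*\ge x-\epsilon$, where $\delta_1=\left(\frac{\delta}{2n}\right)^{24}$.
   Context: $G=\langle V,E,w\rangle$ is a network with $n=|V|$ under the Linear Threshold or Independent Cascade model (live-edge form: LT — each node $v$ independently selects at most one incoming live edge, $(u,v)$ with probability $w_{uv}/W_v$ where $W_v=w_v+\sum_u w_{uv}$ includes a self-weight $w_v$; IC — each edge $(u,v)$ live independently with probability $w_{uv}$). $I_u$ is the expected number of nodes reachable from $u$ via live edges and $I_{max}=\max_u I_u$. A random RR set is the set of nodes that can reach a uniformly random node $v\in V$ via live edges in a freshly sampled live-edge graph. $\mathcal{F_R}(u)$ is the fraction of RR sets in $\mathcal{R}$ containing $u$, and $\mathcal{F_R}^*=\max_{u\in V}\mathcal{F_R}(u)$. *)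

(* Defs.v *)
From HB Require Import structures.
From mathcomp Require Import all_boot all_order all_algebra.
From mathcomp Require Import reals exp.
Set Implicit Arguments. Unset Strict Implicit. Unset Printing Implicit Defensive.
Import Order.TTheory GRing.Theory Num.Theory.
Local Open Scope ring_scope.

Inductive diffusion_model := LT | IC.

Section Defs.
Variables (R : realType) (V : finType).

Definition live_graph := {set (V * V)}.

Definition reach (L : live_graph) (u v : V) : bool :=
  connect (fun a b => (a, b) \in L) u v.

(* Network weights: w u v = w_{uv} (0 when (u,v) is not an edge),
   ws v = self weight w_v (only used by LT). *)
Definition Wtot (w : V -> V -> R) (ws : V -> R) (v : V) : R :=
  ws v + \sum_(u : V) w u v.

Definition valid_weights (m : diffusion_model) (w : V -> V -> R) (ws : V -> R)
  : Prop :=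
  match m with
  | IC => forall u v, 0 <= w u v <= 1
  | LT => (forall u v, 0 <= w u v) /\ (forall v, 0 <= ws v) /\
          (forall v, 0 < Wtot w ws v)
  end.

(* LT: each node v independently selects at most one incoming live edge,
   (u,v) with probability w_uv / W_v, none with probability w_v / W_v. *)
Definition lt_prob (w : V -> V -> R) (ws : V -> R) (L : live_graph) : R :=
  \prod_(v : V)
    (let S := [set u | (u, v) \in L] in
     if #|S| == 0%N then ws v / Wtot w ws v
     else if #|S| == 1%N then (\sum_(u in S) w u v) / Wtot w ws v
     else 0).

Definition ic_prob (w : V -> V -> R) (L : live_graph) : R :=
  \prod_(e : V * V) (if e \in L then w e.1 e.2 else 1 - w e.1 e.2).

Definition live_prob (m : diffusion_model) (w : V -> V -> R) (ws : V -> R)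
  (L : live_graph) : R :=
  match m with LT => lt_prob w ws L | IC => ic_prob w L end.

Definition influence m w ws (u : V) : R :=
  \sum_(L : live_graph) live_prob m w ws L * #|[set v | reach L u v]|%:R.

(* I_max = max_u I_u (all I_u >= 0, so 0 is a neutral start). *)
Definition Imax m w ws : R := \big[Num.max/0]_(u : V) influence m w ws u.

(* One RR-set sample: a live-edge graph L and a root v; the RR set is
   [set u | reach L u v].  Its probability: P(L) * 1/n. *)
Definition rr_sample := (live_graph * V)%type.

Definition rr_prob m w ws (s : rr_sample) : R :=
  live_prob m w ws s.1 / #|V|%:R.

Definition rr_family_prob m w ws (M : nat) (om : {ffun 'I_M -> rr_sample}) : R :=
  \prod_(i < M) rr_prob m w ws (om i).

Definition frac (M : nat) (om : {ffun 'I_M -> rr_sample}) (u : V) : R :=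
  #|[set i : 'I_M | reach (om i).1 u (om i).2]|%:R / M%:R.

Definition frac_max (M : nat) (om : {ffun 'I_M -> rr_sample}) : R :=
  \big[Num.max/0]_(u : V) frac om u.

Definition rr_Pr m w ws (M : nat) (E : pred {ffun 'I_M -> rr_sample}) : R :=
  \sum_(om | E om) rr_family_prob m w ws om.

End Defs.

(* Main.v *)
Require Import Defs.
From HB Require Import structures.
From mathcomp Require Import all_boot all_order all_algebra.
From mathcomp Require Import reals exp.
From mathcomp Require Import sequences ring lra.
Import Order.TTheory GRing.Theory Num.Theory.
Local Open Scope ring_scope.
Lemma expR_cubic (R : realType) (x : R) : 0 <= x ->
  1 + x + x ^+ 2 / 2 + x ^+ 3 / 6 <= expR x.
Proof.
move=> x0.
have h4 := @nondecreasing_cvgn_le R (series (exp_coeff x))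
  (@nondecreasing_series R (exp_coeff x) predT 0 (fun n _ _ => exp_coeff_ge0 n x0))
  (is_cvg_series_exp_coeff x) 4%N.
apply: le_trans h4; rewrite /series /= /exp_coeff /=.
rewrite big_nat_recr //= big_nat_recr //= big_nat_recr //= big_nat_recr //= big_geq //.
rewrite !factS fact0 /=.
rewrite expr0 expr1 !divr1 add0r.
have -> : ((3 * (2 * (1 * 1)))%N%:R : R) = 6 by [].
have -> : ((2 * (1 * 1))%N%:R : R) = 2 by [].
by [].
Qed.

Lemma expRN_le (R : realType) (l : R) : 0 <= l -> expR (- l) <= 1 - l + l ^+ 2 / 2.
Proof.
move=> l0.
have hp : 0 < 1 - l + l ^+ 2 / 2 by nra.
have hc := @expR_cubic R l l0.
rewrite expRN -(@ler_pM2l _ (expR l)) ?expR_gt0 // mulfV ?gt_eqF ?expR_gt0 //.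
apply: le_trans (_ : (1 + l + l ^+ 2 / 2 + l ^+ 3 / 6) * (1 - l + l ^+ 2 / 2) <= _).
  nra.
by rewrite ler_pM2r.
Qed.
Section S.
Variables (R : realType) (V : finType).

Lemma sum_ind_eq (T : finType) (T0 : T) (c : R) :
  \sum_(S : T) (S == T0)%:R * c = c.
Proof.
rewrite (bigD1 T0) //= eqxx mul1r big1 ?addr0 // => S /negbTE ->; exact: mul0r.
Qed.

Lemma lt_factor (A W : R) (wu : V -> R) :
  \sum_(S : {set V}) (if #|S| == 0%N then A
     else if #|S| == 1%N then (\sum_(u in S) wu u) / W else 0)
  = A + (\sum_u wu u) / W.
Proof.
transitivity (\sum_(S : {set V}) ((S == set0)%:R * A +
    \sum_u (S == [set u])%:R * (wu u / W))).
  apply: eq_bigr => S _.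
  have [/cards0_eq ->|S0] := eqVneq #|S| 0%N.
    rewrite eqxx mul1r big1 ?addr0 // => u _.
    case: eqP => [E|_]; last by rewrite mul0r. by have := cards1 u; rewrite -E cards0.
  have Sn0 : (S == set0) = false by apply/negbTE/eqP => E; move: S0; rewrite E cards0 eqxx.
  rewrite Sn0 mul0r add0r.
  case: (cards1P (A:=S)) => [[u0 ->]|Sn1].
    rewrite big_set1 (bigD1 u0) //= eqxx mul1r big1 ?addr0 // => u /negbTE uu0.
    have -> : ([set u0] == [set u]) = false.
      by apply/negbTE/eqP => /set1_inj E; move: uu0; rewrite E eqxx.
    by rewrite mul0r.
  rewrite big1 // => u _; case: eqP => [E|_]; last by rewrite mul0r.
  by exfalso; apply: Sn1; exists u.
rewrite big_split /= sum_ind_eq exchange_big /=; congr (_ + _).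
rewrite mulr_suml; apply: eq_bigr => u _; exact: sum_ind_eq.
Qed.
Lemma sum_set_prod (T : finType) (a b : T -> R) :
  \sum_(L : {set T}) \prod_(e : T) (if e \in L then a e else b e)
  = \prod_(e : T) (a e + b e).
Proof.
rewrite (reindex (fun f : {ffun T -> bool} => [set e | f e])); last first.
  exists (fun L : {set T} => [ffun e => e \in L]).
    by move=> f _; apply/ffunP => e; rewrite ffunE inE.
  by move=> L _; apply/setP => e; rewrite inE ffunE.
transitivity (\prod_e \sum_(c : bool) (if c then a e else b e)).
  by rewrite bigA_distr_bigA; apply: eq_bigr => f _; apply: eq_bigr => e _; rewrite inE.
by apply: eq_bigr => e _; rewrite big_bool.
Qed.

Lemma lt_sum1 (w : V -> V -> R) (ws : V -> R) :
  valid_weights LT w ws -> \sum_(L : live_graph V) lt_prob w ws L = 1.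
Proof.
move=> [w0 [ws0 W0]].
rewrite /lt_prob.
rewrite (reindex (fun F : {ffun V -> {set V}} => [set p : V * V | p.1 \in F p.2])); last first.
  exists (fun L : {set V * V} => [ffun v => [set u | (u, v) \in L]]).
    by move=> F _; apply/ffunP => v; apply/setP => u; rewrite ffunE !inE.
  by move=> L _; apply/setP => [[u v]]; rewrite !inE ffunE inE.
transitivity (\sum_(F : {ffun V -> {set V}}) \prod_v
   (if #|F v| == 0%N then ws v / Wtot w ws v
    else if #|F v| == 1%N then (\sum_(u in F v) w u v) / Wtot w ws v else 0)).
  apply: eq_bigr => F _; apply: eq_bigr => v _ /=.
  have -> : [set u | (u, v) \in [set p : V * V | p.1 \in F p.2]] = F v.
    by apply/setP => u; rewrite !inE.
  by [].
rewrite -(bigA_distr_bigA (fun v (S : {set V}) => if #|S| == 0%N then ws v / Wtot w ws v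
    else if #|S| == 1%N then (\sum_(u in S) w u v) / Wtot w ws v else 0)).
apply: big1 => v _; rewrite lt_factor -mulrDl.
by rewrite mulfV // gt_eqF // W0.
Qed.

Lemma ic_sum1 (w : V -> V -> R) :
  \sum_(L : live_graph V) ic_prob w L = 1.
Proof.
rewrite /ic_prob sum_set_prod big1 // => e _; by rewrite addrC subrK.
Qed.

Lemma live_sum1 m (w : V -> V -> R) ws : valid_weights m w ws ->
  \sum_(L : live_graph V) live_prob m w ws L = 1.
Proof. by case: m => /= h; [apply: lt_sum1 | apply: ic_sum1]. Qed.

Lemma live_ge0 m (w : V -> V -> R) ws (L : live_graph V) : valid_weights m w ws -> 0 <= live_prob m w ws L.
Proof.
case: m => /=.
  move=> [w0 [ws0 W0]]; rewrite /lt_prob; apply: prodr_ge0 => v _ /=.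
  case: ifP => _; first by rewrite divr_ge0 // ltW.
  case: ifP => _ //; apply: divr_ge0; [apply: sumr_ge0 => u _; exact: w0 | exact: ltW].
move=> h; rewrite /ic_prob; apply: prodr_ge0 => e _.
by case: ifP => _; have /andP[? ?] := h e.1 e.2; rewrite ?subr_ge0.
Qed.

Lemma sum_ind_card (T : finType) (b : pred T) :
  \sum_(v : T) (b v)%:R = #|[set v | b v]|%:R :> R.
Proof.
rewrite (eq_bigr (fun v => if b v then 1 else 0)); last by move=> v _; case: (b v).
by rewrite -big_mkcond /= sumr_const cardsE.
Qed.

Lemma prod_ind_card (T : finType) (b : pred T) (t : R) :
  \prod_(v : T) (if b v then t else 1) = t ^+ #|[set v | b v]|.
Proof. by rewrite -big_mkcond /= prodr_const cardsE. Qed.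

Lemma family_sum (M : nat) (S : finType) (f : S -> R) :
  \sum_(om : {ffun 'I_M -> S}) \prod_(i < M) f (om i) = (\sum_s f s) ^+ M.
Proof.
rewrite -(bigA_distr_bigA (fun (i : 'I_M) s => f s)) /=.
by rewrite prodr_const card_ord.
Qed.

Lemma rr_sum1 m (w : V -> V -> R) ws : (0 < #|V|)%N -> valid_weights m w ws ->
  \sum_(s : rr_sample V) rr_prob m w ws s = 1.
Proof.
move=> n0 h; rewrite /rr_prob -(pair_bigA _ (fun L v => live_prob m w ws L / #|V|%:R)) /=.
rewrite -[RHS](live_sum1 _ _ _ h); apply: eq_bigr => L _.
rewrite sumr_const -[_ *+ _]mulr_natr divfK //.
by rewrite pnatr_eq0 -lt0n.
Qed.

Lemma rr_sum_reach m (w : V -> V -> R) ws u :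
  \sum_(s : rr_sample V) rr_prob m w ws s * (reach s.1 u s.2)%:R
  = influence m w ws u / #|V|%:R.
Proof.
rewrite /rr_prob -(pair_bigA _ (fun L v => live_prob m w ws L / #|V|%:R * (reach L u v)%:R)) /=.
rewrite /influence mulr_suml; apply: eq_bigr => L _.
rewrite -mulr_sumr sum_ind_card; rewrite mulrAC.
by [].
Qed.
End S.

Theorem lemma6p4 (R : realType) (V : finType) (m : diffusion_model)
  (w : V -> V -> R) (ws : V -> R) (eps delta x : R) (M : nat) :
  (0 < #|V|)%N ->
  valid_weights m w ws ->
  0 < eps -> 0 < delta < 1 -> 0 < x ->
  M = `|Num.ceil (48 * x / eps ^+ 2 * ln (2 * #|V|%:R / delta))|%N ->
  x * #|V|%:R <= Imax m w ws ->
  rr_Pr m w ws (fun om : {ffun 'I_M -> rr_sample V} => x - eps <= @frac_max R V M om)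
    >= 1 - (delta / (2 * #|V|%:R)) ^+ 24.
Proof.
move=> nV hv e0 /andP[d0 d1] x0 HM HI.
set n : R := #|V|%:R.
have n0 : 0 < n by rewrite /n ltr0n.
have n1 : 1 <= n by rewrite /n ler1n.
have [u Hu] : exists u, x * n <= influence m w ws u.
  move: HI; rewrite /Imax.
  apply: (big_ind (fun y => x * n <= y -> exists u, x * n <= influence m w ws u)).
  - by move=> h; exfalso; move: h; rewrite leNgt mulr_gt0.
  - move=> a b ha hb; rewrite le_max => /orP[/ha|/hb] //.
  - by move=> v _ h; exists v.
set q := \sum_(s : rr_sample V) rr_prob m w ws s * (reach s.1 u s.2)%:R.
have hq : x <= q.
  by rewrite /q rr_sum_reach ler_pdivlMr.
set y := delta / (2 * n).
have y0 : 0 < y by rewrite /y divr_gt0 // mulr_gt0.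
have y1 : y < 1 by rewrite /y ltr_pdivrMr ?mulr_gt0 // mul1r; lra.
set L := ln (2 * n / delta).
have HL : 2 * n / delta = y^-1 by rewrite /y invf_div.
have L0 : 0 < L by rewrite /L HL ln_gt0 // invf_gt1.
set lam := eps / x.
have lam0 : 0 < lam by rewrite divr_gt0.
have elam : eps = lam * x by rewrite /lam divfK // gt_eqF.
have HMr : 48 * x / eps ^+ 2 * L <= M%:R.
  rewrite HM natr_absz ger0_norm; first exact: ceil_ge.
  by rewrite ceil_ge0; apply: lt_le_trans (_ : 0 <= _); [lra | rewrite mulr_ge0 // ?divr_ge0 ?ltW ?mulr_gt0 ?exprn_gt0].
have M0 : 0 < M%:R :> R.
  by apply: lt_le_trans HMr; rewrite mulr_gt0 // divr_gt0 ?mulr_gt0 ?exprn_gt0.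
have h1 : 48 * x * L <= M%:R * eps ^+ 2.
  by rewrite -ler_pdivrMr ?exprn_gt0 //; move: HMr; rewrite mulrAC.
have hM2 : 48 * L <= M%:R * (lam ^+ 2 * x).
  rewrite -(ler_pM2l x0); move: h1; rewrite elam; nra.
set t := expR (- lam).
have ht : t <= 1 - lam + lam ^+ 2 / 2 by apply: expRN_le; rewrite ltW.
have ht1 : t <= 1 by rewrite /t expR_le1 oppr_le0 ltW.
pose K (om : {ffun 'I_M -> rr_sample V}) :=
  #|[set i : 'I_M | reach (om i).1 u (om i).2]|.
pose P (om : {ffun 'I_M -> rr_sample V}) := rr_family_prob m w ws om.
have P0 om : 0 <= P om.
  by apply: prodr_ge0 => i _; rewrite /rr_prob; apply: divr_ge0; [exact: live_ge0 | exact: ltW].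
have Ptot : \sum_om P om = 1.
  by rewrite /P /rr_family_prob family_sum rr_sum1 // expr1n.
pose c := M%:R * (x - eps).
have Hbad : \sum_(om | ~~ (x - eps <= @frac_max R V M om)) P om
    <= \sum_om P om * expR (lam * (c - (K om)%:R)).
  rewrite big_mkcond /=; apply: ler_sum => om _.
  case: ifP => hE; last by rewrite mulr_ge0 // expR_ge0.
  rewrite -[leLHS]mulr1 ler_wpM2l //.
  have hf : @Defs.frac R V M om u <= @frac_max R V M om by apply: le_bigmax.
  have hK : (K om)%:R < c.
    rewrite -ltNge in hE.
    have := le_lt_trans hf hE; rewrite /Defs.frac ltr_pdivrMr // => h.
    by rewrite /c mulrC.
  apply: le_trans (expR_ge1Dx _); rewrite lerDl; apply: mulr_ge0; [exact: ltW | rewrite subr_ge0; exact: ltW].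
set g := fun s : rr_sample V => if reach s.1 u s.2 then t else 1.
have Hfac : \sum_om P om * expR (lam * (c - (K om)%:R))
    = expR (lam * c) * (\sum_s rr_prob m w ws s * g s) ^+ M.
  rewrite -family_sum mulr_sumr; apply: eq_bigr => om _.
  rewrite big_split /= /g (@prod_ind_card R _ (fun i => reach (om i).1 u (om i).2)).
  have -> : lam * (c - (K om)%:R) = lam * c + (K om)%:R * (- lam) by ring.
  rewrite expRD expRM_natl -/t /P /rr_family_prob /K; ring.
have HB : \sum_s rr_prob m w ws s * g s = 1 - (1 - t) * q.
  have -> : 1 - (1 - t) * q = \sum_s rr_prob m w ws s - (1 - t) * q.
    by rewrite (@rr_sum1 R V m w ws nV hv).
  rewrite /q mulr_sumr -sumrB; apply: eq_bigr => s _.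
  by rewrite /g; case: (reach s.1 u s.2); rewrite /=; ring.
have B0 : 0 <= \sum_s rr_prob m w ws s * g s.
  apply: sumr_ge0 => s _; rewrite mulr_ge0 //.
    by rewrite /rr_prob; apply: divr_ge0; [exact: live_ge0 | exact: ltW].
  by rewrite /g; case: ifP => _ //; rewrite /t expR_ge0.
have HB2 : \sum_s rr_prob m w ws s * g s <= expR (- ((1 - t) * x)).
  rewrite HB; apply: le_trans (expR_ge1Dx _).
  by rewrite lerD2l lerN2 ler_wpM2l // subr_ge0.
have Hfin : expR (lam * c) * expR (- ((1 - t) * x)) ^+ M <= y ^+ 24.
  rewrite -expRM_natl -expRD.
  have -> : y ^+ 24 = expR (- (24%:R * L)).
    rewrite /L HL lnV ?posrE // mulrN opprK expRM_natl lnK //.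
  rewrite ler_expR /c elam.
  have hMx : 0 <= M%:R * x by rewrite mulr_ge0 ?ltW.
  have ht' : lam - lam ^+ 2 / 2 <= 1 - t by lra.
  nra.
rewrite /rr_Pr -/P.
have Hsplit : \sum_om P om = \sum_(om | x - eps <= @frac_max R V M om) P om
    + \sum_(om | ~~ (x - eps <= @frac_max R V M om)) P om.
  by rewrite (bigID (fun om => x - eps <= @frac_max R V M om)).
rewrite Ptot in Hsplit.
have Hb : \sum_(om | ~~ (x - eps <= @frac_max R V M om)) P om <= y ^+ 24.
  apply: le_trans Hbad _; rewrite Hfac.
  apply: le_trans Hfin; rewrite ler_wpM2l ?expR_ge0 //.
  by apply: lerXn2r; rewrite ?nnegrE ?expR_ge0.
rewrite -/y. lra.
Qed.
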